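(* Let $A^T\in\mathbb{R}^{n_o\times n}$, $G\in\mathbb{R}^{n\times n_h}$, $B^T\in\mathbb{R}^{n\times n}$ be the Toom-Cook matrices defined in the context, let $H\in F^{n_h\times n_h}$ and $X\in F^{n\times n}$ be floating point matrices, let $S=A^T(GHG^T\odot B^TXB)A$ be the exact result and $\hat S$ the floating point result computed as described in the context. Then $$|\hat S-S|\le |A^T|\big(|G|\,|H|\,|G^T|\odot|B^T|\,|X|\,|B|\big)|A|\,\big(2\alpha^{(n)}+2\beta^{(n)}+2\gamma^{(n_h)}+1\big)\varepsilon+O(\varepsilon^2)$$ entrywise, and $$\|\hat S-S\|_1\le \|A^T\|_1\|G\|_F\|H\|_F\|G^T\|_F\|B^T\|_F\|X\|_F\|B\|_F\|A\|_1\,\big(2\alpha^{(n)}+2\beta^{(n)}+2\gamma^{(n_h)}+1\big)\varepsilon+O(\varepsilon^2).$$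
   Context: Toom-Cook matrices: $n=n_o+n_h-1$, $p_1,\dots,p_n$ distinct reals, $N_i=1/\prod_{j\ne i}(p_i-p_j)$, $M_{i,j}$ the coefficient of $a^{j-1}$ in $\prod_{k\ne i}(a-p_k)$; $A^T_{i,j}=p_j^{i-1}$ ($i\le n_o$, $j\le n$), $G_{i,j}=p_i^{j-1}N_i$ ($i\le n$, $j\le n_h$), $B^T_{i,j}=M_{j,i}$; $A$, $G^T$, $B$ are the transposes. $\odot$ is the Hadamard product, $|\cdot|$ entrywise absolute value (matrix inequalities entrywise), $\|\cdot\|_1$ the induced matrix 1-norm (maximum absolute column sum), $\|\cdot\|_F$ the Frobenius norm. Floating point model: set $F$ of floating point numbers, unit roundoff $\varepsilon$, no overflow, $fl(y)=y(1+\delta)$, $fl(y\,\mathrm{op}\,z)=(y\,\mathrm{op}\,z)(1+\delta)$ with $|\delta|\le\varepsilon$; the matrix entries are stored rounded. Computation of $\hat S$: $U=fl(fl(G)\,H\,fl(G^T))$ and $V=fl(fl(B^T)\,X\,fl(B))$ are computed by matrix products (dot products of rows/columns), $W_{ij}=fl(U_{ij}V_{ij})$, and $\hat S=fl(fl(A^T)\,W\,fl(A))$. The same summation method is used for multiplication by a matrix and by its transpose. Constants: $\alpha^{(n)},\beta^{(n)},\gamma^{(n_h)}$ are constants such that for every row $a^T$ of $A^T$ (resp. $B^T$, resp. $G$) — equivalently every column of $A$ (resp. $B$, $G^T$) — and every floating point vector $y$ of matching length the computed dot product satisfies $|a^Ty-fl(fl(a^T)y)|\le|a^T|\,|y|\,c\,\varepsilon+O(\varepsilon^2)$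 with $c=\alpha^{(n)}$ (resp. $\beta^{(n)}$, $\gamma^{(n_h)}$). *)

(* Defs.v *)
From HB Require Import structures.
From mathcomp Require Import all_boot all_order all_algebra.
Set Implicit Arguments. Unset Strict Implicit. Unset Printing Implicit Defensive.
Import Order.TTheory GRing.Theory Num.Theory.
Local Open Scope ring_scope.

Section TC.
Variable R : rcfType.

Definition tc_dim (no nh : nat) : nat := (no + nh).-1.

(* N_i = 1 / prod_{j <> i} (p_i - p_j)   (indices are 0-based) *)
Definition tcN (n : nat) (p : 'I_n -> R) (i : 'I_n) : R :=
  (\prod_(j < n | j != i) (p i - p j))^-1.

(* prod_{k <> i} (a - p_k); M_{i,j} = its coefficient of a^j (0-based) *)
Definition tcMpoly (n : nat) (p : 'I_n -> R) (i : 'I_n) : {poly R} :=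
  \prod_(k < n | k != i) ('X - (p k)%:P).

Definition tcAT (no n : nat) (p : 'I_n -> R) : 'M[R]_(no, n) :=
  \matrix_(i < no, j < n) (p j ^+ i).
Definition tcG (n nh : nat) (p : 'I_n -> R) : 'M[R]_(n, nh) :=
  \matrix_(i < n, j < nh) (p i ^+ j * tcN p i).
Definition tcBT (n : nat) (p : 'I_n -> R) : 'M[R]_(n, n) :=
  \matrix_(i < n, j < n) (tcMpoly p j)`_i.

Definition absM (m n : nat) (M : 'M[R]_(m, n)) : 'M[R]_(m, n) :=
  map_mx (fun x => `|x|) M.
Definition hadamard (m n : nat) (A B : 'M[R]_(m, n)) : 'M[R]_(m, n) :=
  \matrix_(i < m, j < n) (A i j * B i j).
Definition norm1 (m n : nat) (M : 'M[R]_(m, n)) : R :=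
  \big[Num.max/0]_(j < n) \sum_(i < m) `|M i j|.
Definition frob (m n : nat) (M : 'M[R]_(m, n)) : R :=
  Num.sqrt (\sum_(i < m) \sum_(j < n) M i j ^+ 2).
Definition dotv (m : nat) (u v : 'rV[R]_m) : R := \sum_(k < m) u 0 k * v 0 k.

(* The floating point model: unit roundoff eps, set F of floating point numbers,
   rounding of stored values fl(y) = y(1+d), and floating multiplication
   fl(y*z) = (y*z)(1+d), |d| <= eps, results in F (no overflow). *)
Record fp_model := FPModel {
  fp_eps : R;
  fp_F : R -> Prop;
  fp_rnd : R -> R;
  fp_mul : R -> R -> R;
  fp_eps_ge0 : 0 <= fp_eps;
  fp_rnd_spec : forall y, exists2 d, `|d| <= fp_eps & fp_rnd y = y * (1 + d);
  fp_rnd_F : forall y, fp_F (fp_rnd y);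
  fp_mul_spec : forall y z, exists2 d, `|d| <= fp_eps & fp_mul y z = (y * z) * (1 + d);
  fp_mul_F : forall y z, fp_F (fp_mul y z)
}.

(* A summation method for dot products with the rows of C: [dot u y] is the
   computed value fl(u y) where u = fl(c^T) is a stored (rounded) row of C
   and y a floating point vector.  [dot_bound] says that c is a valid constant
   (alpha, beta, gamma in the paper): for every row c^T of C and every floating
   point vector y,
   |c^T y - fl(fl(c^T) y)| <= |c^T| |y| c eps + K0 eps^2 |c^T| |y|. *)
Definition dot_bound (fm : fp_model) (k m : nat) (C : 'M[R]_(k, m))
  (dot : 'rV[R]_m -> 'rV[R]_m -> R) (c K0 : R) : Prop :=
  forall (i : 'I_k) (y : 'rV[R]_m), (forall j, fp_F fm (y 0 j)) ->
    `|dotv (row i C) y - dot (map_mx (fp_rnd fm) (row i C)) y|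
      <= dotv (absM (row i C)) (absM y) * c * fp_eps fm
         + K0 * fp_eps fm ^+ 2 * dotv (absM (row i C)) (absM y).

Definition tc_exact (no n nh : nat) (AT : 'M[R]_(no, n)) (G : 'M[R]_(n, nh))
  (BT : 'M[R]_(n, n)) (H : 'M[R]_nh) (X : 'M[R]_n) : 'M[R]_no :=
  AT *m hadamard (G *m H *m G^T) (BT *m X *m BT^T) *m AT^T.

(* Floating point computation of S_hat:
   U = fl(fl(G) H fl(G^T)), V = fl(fl(B^T) X fl(B)) (products evaluated left to
   right, each entry a computed dot product), W_ij = fl(U_ij V_ij),
   S_hat = fl(fl(A^T) W fl(A)).  A product with a column of fl(C^T) is a
   dot product with the corresponding row of fl(C), computed with the same
   summation method. *)
Definition tc_computed (fm : fp_model) (no n nh : nat) (AT : 'M[R]_(no, n))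
  (G : 'M[R]_(n, nh)) (BT : 'M[R]_(n, n))
  (dotA dotB : 'rV[R]_n -> 'rV[R]_n -> R) (dotG : 'rV[R]_nh -> 'rV[R]_nh -> R)
  (H : 'M[R]_nh) (X : 'M[R]_n) : 'M[R]_no :=
  let rnd := fp_rnd fm in
  let U1 := \matrix_(i < n, j < nh) dotG (map_mx rnd (row i G)) (row j H^T) in
  let U := \matrix_(i < n, j < n) dotG (map_mx rnd (row j G)) (row i U1) in
  let V1 := \matrix_(i < n, j < n) dotB (map_mx rnd (row i BT)) (row j X^T) in
  let V := \matrix_(i < n, j < n) dotB (map_mx rnd (row j BT)) (row i V1) in
  let W := \matrix_(i < n, j < n) fp_mul fm (U i j) (V i j) in
  let Z := \matrix_(i < no, j < n) dotA (map_mx rnd (row i AT)) (row j W^T) in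
  \matrix_(i < no, j < no) dotA (map_mx rnd (row j AT)) (row i Z).

End TC.

(* Main.v *)
Require Import Defs.
From HB Require Import structures.
From mathcomp Require Import all_boot all_order all_algebra.
From mathcomp Require Import ring lra.
Import Order.TTheory GRing.Theory Num.Theory.
Set Implicit Arguments. Unset Strict Implicit.
Local Open Scope ring_scope.

Lemma abs_mul {R : rcfType} m n p (A : 'M[R]_(m,n)) (B : 'M[R]_(n,p)) i j :
  `|(A *m B) i j| <= (absM A *m absM B) i j.
Proof.
rewrite !mxE; apply: le_trans (ler_norm_sum _ _ _) _.
by apply: ler_sum => k _; rewrite !mxE normrM.
Qed.

Lemma mono_l {R : rcfType} m n p (A E : 'M[R]_(m,n)) (B : 'M[R]_(n,p)) s :
  (forall i j, A i j <= E i j * s) -> (forall i j, 0 <= B i j) ->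
  forall i j, (A *m B) i j <= (E *m B) i j * s.
Proof.
move=> hA hB i j; rewrite !mxE mulr_suml; apply: ler_sum => k _.
by rewrite mulrAC; apply: ler_wpM2r.
Qed.

Lemma mono_r {R : rcfType} m n p (A : 'M[R]_(m,n)) (B E : 'M[R]_(n,p)) s :
  (forall i j, B i j <= E i j * s) -> (forall i j, 0 <= A i j) ->
  forall i j, (A *m B) i j <= (A *m E) i j * s.
Proof.
move=> hB hA i j; rewrite !mxE mulr_suml; apply: ler_sum => k _.
by rewrite -mulrA; apply: ler_wpM2l.
Qed.

Lemma absM_ge0 {R : rcfType} m n (A : 'M[R]_(m,n)) i j : 0 <= absM A i j.
Proof. by rewrite mxE. Qed.

Lemma mul_ge0 {R : rcfType} m n p (A : 'M[R]_(m,n)) (B : 'M[R]_(n,p)) :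
  (forall i j, 0 <= A i j) -> (forall i j, 0 <= B i j) ->
  forall i j, 0 <= (A *m B) i j.
Proof.
by move=> hA hB i j; rewrite mxE; apply: sumr_ge0 => k _; apply: mulr_ge0.
Qed.

Lemma mul_err_l {R : rcfType} m n p (A E : 'M[R]_(m,n)) (B : 'M[R]_(n,p)) s :
  (forall i j, `|A i j| <= E i j * s) ->
  forall i j, `|(A *m B) i j| <= (E *m absM B) i j * s.
Proof.
move=> h i j; apply: le_trans (abs_mul A B i j) _.
apply: mono_l => // [i0 j0|]; first by rewrite mxE.
exact: absM_ge0.
Qed.

Lemma mul_err_r {R : rcfType} m n p (A : 'M[R]_(m,n)) (B E : 'M[R]_(n,p)) s :
  (forall i j, `|B i j| <= E i j * s) ->
  forall i j, `|(A *m B) i j| <= (absM A *m E) i j * s.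
Proof.
move=> h i j; apply: le_trans (abs_mul A B i j) _.
apply: mono_r => // [i0 j0|]; first by rewrite mxE.
exact: absM_ge0.
Qed.

Lemma mxBE {R : rcfType} m n (A B : 'M[R]_(m,n)) i j : (A - B) i j = A i j - B i j.
Proof. by rewrite !mxE. Qed.

Lemma GL {R : rcfType} (fm : fp_model R) k m (C : 'M[R]_(k,m)) dot c K0 p
  (Y : 'M[R]_(p,m)) :
  dot_bound fm C dot c K0 -> (forall i j, fp_F fm (Y i j)) ->
  forall i j,
  `|dot (map_mx (fp_rnd fm) (row j C)) (row i Y) - (Y *m C^T) i j|
    <= (absM Y *m absM C^T) i j * (c * fp_eps fm + `|K0| * fp_eps fm ^+ 2).
Proof.
move=> hd hY i j.
have hr : forall j0, fp_F fm (row i Y 0 j0) by move=> j0; rewrite mxE.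
have := hd j _ hr.
have E1 : dotv (row j C) (row i Y) = (Y *m C^T) i j.
  by rewrite /dotv !mxE; apply: eq_bigr => l _; rewrite !mxE mulrC.
have E2 : dotv (absM (row j C)) (absM (row i Y)) = (absM Y *m absM C^T) i j.
  by rewrite /dotv !mxE; apply: eq_bigr => l _; rewrite !mxE mulrC.
rewrite E1 E2 distrC => h; apply: le_trans h _.
set d := (absM Y *m absM C^T) i j.
have d0 : 0 <= d by apply: mul_ge0 => *; apply: absM_ge0.
have e0 := fp_eps_ge0 fm.
rewrite mulrDr -mulrA [d * _]mulrC lerD2l [_ * d]mulrC mulrA.
rewrite -mulrA; apply: ler_wpM2l => //; apply: ler_wpM2r; first exact: exprn_ge0.
exact: ler_norm.
Qed.

Lemma TWO {R : rcfType} (fm : fp_model R) k m (C : 'M[R]_(k,m)) (Hm : 'M[R]_m)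
  dot c K0 :
  dot_bound fm C dot c K0 -> (forall u y, fp_F fm (dot u y)) ->
  (forall i j, fp_F fm (Hm i j)) -> 0 <= c ->
  forall i j,
  `|dot (map_mx (fp_rnd fm) (row j C))
      (row i (\matrix_(i0 < k, j0 < m) dot (map_mx (fp_rnd fm) (row i0 C)) (row j0 Hm^T)))
     - (C *m Hm *m C^T) i j|
  <= (absM C *m absM Hm *m absM C^T) i j *
     ((c * fp_eps fm + `|K0| * fp_eps fm ^+ 2) +
      (1 + (c * fp_eps fm + `|K0| * fp_eps fm ^+ 2)) *
        (c * fp_eps fm + `|K0| * fp_eps fm ^+ 2)).
Proof.
move=> hd hF hH c0 i j.
set d := (c * fp_eps fm + `|K0| * fp_eps fm ^+ 2).
have e0 := fp_eps_ge0 fm.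
have d0 : 0 <= d by apply: addr_ge0; [apply: mulr_ge0|apply: mulr_ge0 => //; apply: exprn_ge0].
set U1 := \matrix_(i0 < k, j0 < m) _.
have h1 : forall i0 j0, `|U1 i0 j0 - (C *m Hm) i0 j0| <= (absM C *m absM Hm) i0 j0 * d.
  move=> i0 j0; rewrite /U1 mxE.
  have := GL hd (Y := Hm^T) (fun a b => _) j0 i0.
  have -> : (absM C *m absM Hm) i0 j0 = (absM Hm^T *m absM C^T) j0 i0.
    by rewrite !mxE; apply: eq_bigr => l _; rewrite !mxE mulrC.
  rewrite -trmx_mul mxE; apply.
  by move=> a b; rewrite mxE.
have h2 : forall i0 j0, `|U1 i0 j0| <= (absM C *m absM Hm) i0 j0 * (1 + d).
  move=> i0 j0; rewrite mulrDr mulr1 addrC.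
  rewrite -[U1 i0 j0]subr0.
  apply: le_trans (ler_distD ((C *m Hm) i0 j0) _ _) _.
  rewrite subr0; apply: lerD; first exact: h1.
  exact: abs_mul.
have hU : forall i0 j0, fp_F fm (U1 i0 j0) by move=> *; rewrite /U1 mxE.
have h3 := GL hd hU i j.
have h4 : `|((U1 - C *m Hm) *m C^T) i j| <= (absM C *m absM Hm *m absM C^T) i j * d.
  apply: mul_err_l => i0 j0; rewrite mxBE; exact: h1.
have h5 : (absM U1 *m absM C^T) i j <= (absM C *m absM Hm *m absM C^T) i j * (1 + d).
  apply: mono_l => [i0 j0|i0 j0]; last exact: absM_ge0.
  rewrite mxE; exact: h2.
rewrite mulmxBl mxBE in h4.
apply: le_trans (ler_distD ((U1 *m C^T) i j) _ _) _.
rewrite mulrDr addrC mulrA; apply: lerD; first exact: h4.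
apply: le_trans h3 _; exact: ler_wpM2r.
Qed.

Lemma eqle {R : rcfType} (x y : R) : x = y -> x <= y.
Proof. by move=> ->. Qed.

Definition sm {R : rcfType} (c : R) (x : R -> R) :=
  exists K, 0 <= K /\ forall e, 0 <= e <= 1 -> 0 <= x e /\ x e <= c * e + K * e ^+ 2.

Lemma sm_e {R : rcfType} : sm (1 : R) id.
Proof. exists 0; split => // e /andP[e0 e1]; split => //; by rewrite mul0r addr0 mul1r. Qed.

Lemma sm_sq {R : rcfType} (k : R) : 0 <= k -> sm 0 (fun e => k * e ^+ 2).
Proof.
move=> k0; exists k; split => // e /andP[e0 e1]; split.
  by apply: mulr_ge0 => //; apply: exprn_ge0.
by rewrite mul0r add0r.
Qed.

Lemma sm_add {R : rcfType} (c1 c2 : R) x y : sm c1 x -> sm c2 y ->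
  sm (c1 + c2) (fun e => x e + y e).
Proof.
move=> [K1 [K10 h1]] [K2 [K20 h2]]; exists (K1 + K2); split; first exact: addr_ge0.
move=> e he; have [a1 b1] := h1 e he; have [a2 b2] := h2 e he.
split; first exact: addr_ge0.
apply: le_trans (lerD b1 b2) _; apply: eqle; ring.
Qed.

Lemma sm_mul {R : rcfType} (c1 c2 : R) x y : 0 <= c1 -> 0 <= c2 -> sm c1 x -> sm c2 y ->
  sm 0 (fun e => x e * y e).
Proof.
move=> c10 c20 [K1 [K10 h1]] [K2 [K20 h2]].
exists ((c1 + K1) * (c2 + K2)); split; first by apply: mulr_ge0; apply: addr_ge0.
move=> e he; have [a1 b1] := h1 e he; have [a2 b2] := h2 e he.
case/andP: he => e0 e1.
split; first exact: mulr_ge0.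
have q1 : x e <= (c1 + K1) * e.
  apply: le_trans b1 _; rewrite mulrDl lerD2l expr2 mulrA ler_piMr //.
  exact: mulr_ge0.
have q2 : y e <= (c2 + K2) * e.
  apply: le_trans b2 _; rewrite mulrDl lerD2l expr2 mulrA ler_piMr //.
  exact: mulr_ge0.
apply: le_trans (ler_pM a1 a2 q1 q2) _; apply: eqle; rewrite expr2; ring.
Qed.

Lemma sm_scale {R : rcfType} (a c : R) x : 0 <= a -> sm c x -> sm (a * c) (fun e => a * x e).
Proof.
move=> a0 [K [K0 h]]; exists (a * K); split; first exact: mulr_ge0.
move=> e he; have [a1 b1] := h e he; split; first exact: mulr_ge0.
apply: le_trans (ler_wpM2l a0 b1) _; apply: eqle; ring.
Qed.

Lemma sm_ext {R : rcfType} (c c' : R) x y : sm c x -> c = c' ->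
  (forall e, 0 <= e <= 1 -> x e = y e) -> sm c' y.
Proof.
move=> [K [K0 h]] <- he; exists K; split => // e hh; rewrite -he //; exact: h.
Qed.

Lemma scalar_main {R : rcfType} (alpha beta gamma k : R) :
  0 <= alpha -> 0 <= beta -> 0 <= gamma -> 0 <= k ->
  exists K, 0 <= K /\ forall e, 0 <= e <= 1 ->
  let da := alpha * e + k * e ^+ 2 in
  let db := beta * e + k * e ^+ 2 in
  let dg := gamma * e + k * e ^+ 2 in
  let ra := da + (1 + da) * da in
  let ru := dg + (1 + dg) * dg in
  let rv := db + (1 + db) * db in
  let w := ru * (1 + rv) * (1 + e) + rv * (1 + e) + e in
  (1 + w) * ra + w <= (2 * alpha + 2 * beta + 2 * gamma + 1) * e + K * e ^+ 2.
Proof.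
move=> a0 b0 g0 k0.
have sd : forall t, 0 <= t -> sm t (fun e => t * e + k * e ^+ 2).
  move=> t t0; apply: sm_ext (sm_add (sm_scale t0 sm_e) (sm_sq k0)) _ _.
    by rewrite mulr1 addr0.
  by [].
have sr : forall t, 0 <= t -> sm (t + t) (fun e => (t * e + k * e ^+ 2) +
     (1 + (t * e + k * e ^+ 2)) * (t * e + k * e ^+ 2)).
  move=> t t0.
  apply: sm_ext (sm_add (sm_add (sd t t0) (sd t t0)) (sm_mul t0 t0 (sd t t0) (sd t t0))) _ _.
    by rewrite addr0.
  by move=> e _ /=; ring.
have t2 : forall t : R, 0 <= t -> 0 <= t + t by move=> t t0; apply: addr_ge0.
have hru := sr gamma g0; have hrv := sr beta b0; have hra := sr alpha a0.
have hw := sm_add (sm_add (sm_add (sm_add (sm_add (sm_add hru hrv) sm_e)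
   (sm_mul (t2 _ g0) (t2 _ b0) hru hrv))
   (sm_mul (t2 _ g0) ler01 hru sm_e))
   (sm_mul (lexx 0) ler01 (sm_mul (t2 _ g0) (t2 _ b0) hru hrv) sm_e))
   (sm_mul (t2 _ b0) ler01 hrv sm_e).
have cw0 : 0 <= gamma + gamma + (beta + beta) + 1 + 0 + 0 + 0 + 0.
  rewrite !addr0; apply: addr_ge0; last exact: ler01.
  by apply: addr_ge0; apply: t2.
have hf := sm_add (sm_add hra hw) (sm_mul cw0 (t2 _ a0) hw hra).
move: hf => [K [K0 hK]]; exists K; split => // e he /=.
have [_ hle] := hK e he.
apply: (le_trans _ (le_trans hle _)); apply: eqle; rewrite /=; ring.
Qed.

Lemma hadam {R : rcfType} (U u V v P Q ru rv dd e : R) :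
  `|U - u| <= P * ru -> `|u| <= P -> `|V - v| <= Q * rv -> `|v| <= Q ->
  `|dd| <= e -> 0 <= ru -> 0 <= rv ->
  `|U * V * (1 + dd) - u * v| <=
    P * Q * (ru * (1 + rv) * (1 + e) + rv * (1 + e) + e).
Proof.
move=> hU hu hV hv hd ru0 rv0.
have P0 : 0 <= P by apply: le_trans hu.
have Q0 : 0 <= Q by apply: le_trans hv.
have e0 : 0 <= e by apply: le_trans hd.
have hV' : `|V| <= Q * (1 + rv).
  rewrite mulrDr mulr1 addrC -[V]subr0.
  apply: le_trans (ler_distD v _ _) _; rewrite subr0; exact: lerD.
have h1 : `|1 + dd| <= 1 + e.
  apply: le_trans (ler_normD _ _) _; rewrite normr1; exact: lerD.
have -> : U * V * (1 + dd) - u * v =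
   (U - u) * (V * (1 + dd)) + u * ((V - v) * (1 + dd)) + u * v * dd by ring.
apply: le_trans (ler_normD _ _) _.
apply: le_trans (lerD (ler_normD _ _) (lexx _)) _.
rewrite !normrM.
have q1 := ler_pM (normr_ge0 _) (mulr_ge0 (normr_ge0 _) (normr_ge0 _)) hU
   (ler_pM (normr_ge0 _) (normr_ge0 _) hV' h1).
have q2 := ler_pM (normr_ge0 _) (mulr_ge0 (normr_ge0 _) (normr_ge0 _)) hu
   (ler_pM (normr_ge0 _) (normr_ge0 _) hV h1).
have q3 := ler_pM (mulr_ge0 (normr_ge0 _) (normr_ge0 _)) (normr_ge0 _)
   (ler_pM (normr_ge0 _) (normr_ge0 _) hu hv) hd.
apply: le_trans (lerD (lerD q1 q2) q3) _.
apply: eqle; ring.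
Qed.

Lemma CS {R : rcfType} n (a b : 'I_n -> R) :
  (\sum_i a i * b i) ^+ 2 <= (\sum_i a i ^+ 2) * (\sum_i b i ^+ 2).
Proof.
have h : 0 <= \sum_i \sum_j (a i * b j - a j * b i) ^+ 2.
  by apply: sumr_ge0 => i _; apply: sumr_ge0 => j _; apply: sqr_ge0.
have E : \sum_i \sum_j (a i * b j - a j * b i) ^+ 2 =
   \sum_i \sum_j (a i ^+ 2 * b j ^+ 2) + \sum_i \sum_j (a j ^+ 2 * b i ^+ 2)
   - 2 * \sum_i \sum_j ((a i * b i) * (a j * b j)).
  rewrite mulr_sumr -big_split -sumrB /=; apply: eq_bigr => i _.
  rewrite mulr_sumr -big_split -sumrB /=; apply: eq_bigr => j _; ring.
have e1 : (\sum_i a i ^+ 2) * (\sum_i b i ^+ 2) = \sum_i \sum_j (a i ^+ 2 * b j ^+ 2).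
  by rewrite mulr_suml; apply: eq_bigr => i _; rewrite mulr_sumr.
have e2 : (\sum_i a i * b i) ^+ 2 = \sum_i \sum_j ((a i * b i) * (a j * b j)).
  by rewrite expr2 mulr_suml; apply: eq_bigr => i _; rewrite mulr_sumr.
have e3 : \sum_i \sum_j (a j ^+ 2 * b i ^+ 2) = \sum_i \sum_j (a i ^+ 2 * b j ^+ 2).
  by rewrite exchange_big.
rewrite E e3 in h; rewrite e1 e2.
rewrite -subr_ge0; move: h.
set x := \sum_i _; set y := \sum_i _.
have -> : x + x - 2 * y = 2 * (x - y) by ring.
by rewrite pmulr_rge0.
Qed.

Lemma norm1_le {R : rcfType} m n (X : 'M[R]_(m,n)) b :
  0 <= b -> (forall j, \sum_i `|X i j| <= b) -> norm1 X <= b.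
Proof. by move=> b0 h; rewrite /norm1; apply: bigmax_le => // j _; exact: h. Qed.

Lemma col_le {R : rcfType} m n (X : 'M[R]_(m,n)) j : \sum_i `|X i j| <= norm1 X.
Proof. by rewrite /norm1; exact: (le_bigmax 0 (fun j => \sum_i `|X i j|) j). Qed.

Lemma norm1_ge0 {R : rcfType} m n (X : 'M[R]_(m,n)) : 0 <= norm1 X.
Proof.
rewrite /norm1; apply: (big_ind (fun x : R => 0 <= x)) => //.
  by move=> x y hx hy; rewrite le_max hx.
by move=> j _; apply: sumr_ge0.
Qed.

Lemma norm1_mul {R : rcfType} m n p (A : 'M[R]_(m,n)) (B : 'M[R]_(n,p)) :
  norm1 (A *m B) <= norm1 A * norm1 B.
Proof.
apply: norm1_le; first by apply: mulr_ge0; apply: norm1_ge0.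
move=> j.
apply: (@le_trans _ _ (\sum_i \sum_k `|A i k| * `|B k j|)).
  apply: ler_sum => i _; rewrite mxE; apply: le_trans (ler_norm_sum _ _ _) _.
  by apply: ler_sum => k _; rewrite normrM.
rewrite exchange_big /=.
apply: (@le_trans _ _ (\sum_k norm1 A * `|B k j|)).
  apply: ler_sum => k _; rewrite -mulr_suml; apply: ler_wpM2r => //.
  exact: col_le.
rewrite -mulr_sumr; apply: ler_wpM2l; first exact: norm1_ge0.
exact: col_le.
Qed.

Lemma norm1_abs {R : rcfType} m n (A : 'M[R]_(m,n)) : norm1 (absM A) = norm1 A.
Proof.
rewrite /norm1; apply: eq_bigr => j _; apply: eq_bigr => i _; by rewrite mxE normr_id.
Qed.

Lemma frob_abs {R : rcfType} m n (A : 'M[R]_(m,n)) : frob (absM A) = frob A.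
Proof.
rewrite /frob; congr Num.sqrt; apply: eq_bigr => i _; apply: eq_bigr => j _.
by rewrite mxE real_normK // num_real.
Qed.

Lemma frob_ge0 {R : rcfType} m n (A : 'M[R]_(m,n)) : 0 <= frob A.
Proof. exact: sqrtr_ge0. Qed.

Lemma term_le {R : rcfType} n (F : 'I_n -> R) j : (forall i, 0 <= F i) -> F j <= \sum_i F i.
Proof. by move=> h; rewrite (bigD1 j) //= lerDl; apply: sumr_ge0. Qed.

Lemma sumsq_ge0 {R : rcfType} m n (A : 'M[R]_(m,n)) : 0 <= \sum_i \sum_j A i j ^+ 2.
Proof. by apply: sumr_ge0 => i _; apply: sumr_ge0 => j _; apply: sqr_ge0. Qed.

Lemma norm1_had {R : rcfType} m n (P Q : 'M[R]_(m,n)) :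
  norm1 (hadamard P Q) <= frob P * frob Q.
Proof.
apply: norm1_le; first by apply: mulr_ge0; apply: frob_ge0.
move=> j.
set s := \sum_i _.
have s0 : 0 <= s by apply: sumr_ge0.
have -> : s = Num.sqrt (s ^+ 2) by rewrite sqrtr_sqr ger0_norm.
rewrite /frob -sqrtrM; last exact: sumsq_ge0.
apply: ler_wsqrtr.
have -> : s = \sum_i `|P i j| * `|Q i j|.
  by rewrite /s; apply: eq_bigr => i _; rewrite mxE normrM.
apply: le_trans (CS _ _) _.
have hP : \sum_i `|P i j| ^+ 2 <= \sum_i \sum_j0 P i j0 ^+ 2.
  apply: ler_sum => i _; rewrite real_normK ?num_real //.
  by apply: (@term_le _ _ (fun j0 => P i j0 ^+ 2)) => k; apply: sqr_ge0.
have hQ : \sum_i `|Q i j| ^+ 2 <= \sum_i \sum_j0 Q i j0 ^+ 2.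
  apply: ler_sum => i _; rewrite real_normK ?num_real //.
  by apply: (@term_le _ _ (fun j0 => Q i j0 ^+ 2)) => k; apply: sqr_ge0.
apply: ler_pM => //; apply: sumr_ge0 => i _; apply: sqr_ge0.
Qed.

Lemma frob_mul {R : rcfType} m n p (A : 'M[R]_(m,n)) (B : 'M[R]_(n,p)) :
  frob (A *m B) <= frob A * frob B.
Proof.
rewrite /frob -sqrtrM; last exact: sumsq_ge0.
apply: ler_wsqrtr.
rewrite (exchange_big _ _ _ _ _ (fun k j => B k j ^+ 2)) /= mulr_suml.
apply: ler_sum => i _; rewrite mulr_sumr; apply: ler_sum => j _.
rewrite mxE; exact: (@CS _ _ (fun k => A i k) (fun k => B k j)).
Qed.

Lemma hadE {R : rcfType} m n (A B : 'M[R]_(m,n)) i j : hadamard A B i j = A i j * B i j.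
Proof. by rewrite mxE. Qed.

Unset Implicit Arguments.
Set Strict Implicit.

Theorem mainTheorem3 (R : rcfType) (no nh : nat)
  (p : 'I_(tc_dim no nh) -> R) (alpha beta gamma K0 : R) :
  (0 < no)%N -> (0 < nh)%N -> injective p ->
  0 <= alpha -> 0 <= beta -> 0 <= gamma ->
  exists K : R,
  forall (fm : fp_model R)
    (dotA dotB : 'rV[R]_(tc_dim no nh) -> 'rV[R]_(tc_dim no nh) -> R)
    (dotG : 'rV[R]_nh -> 'rV[R]_nh -> R)
    (H : 'M[R]_nh) (X : 'M[R]_(tc_dim no nh)),
  fp_eps fm <= 1 ->
  dot_bound fm (tcAT no p) dotA alpha K0 ->
  dot_bound fm (tcBT p) dotB beta K0 ->
  dot_bound fm (tcG nh p) dotG gamma K0 ->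
  (forall u y, fp_F fm (dotA u y)) ->
  (forall u y, fp_F fm (dotB u y)) ->
  (forall u y, fp_F fm (dotG u y)) ->
  (forall i j, fp_F fm (H i j)) ->
  (forall i j, fp_F fm (X i j)) ->
  let AT := tcAT no p in let A := AT^T in
  let G := tcG nh p in let GT := G^T in
  let BT := tcBT p in let B := BT^T in
  let eps := fp_eps fm in
  let c := 2 * alpha + 2 * beta + 2 * gamma + 1 in
  let S := tc_exact AT G BT H X in
  let Shat := tc_computed fm AT G BT dotA dotB dotG H X in
  let M := absM AT *m hadamard (absM G *m absM H *m absM GT)
                               (absM BT *m absM X *m absM B) *m absM A in
  let N := norm1 AT * frob G * frob H * frob GT * frob BT * frob X * frob B
           * norm1 A in
  (forall i j, `|(Shat - S) i j| <= M i j * c * eps + K * eps ^+ 2 * M i j) /\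
  norm1 (Shat - S) <= N * c * eps + K * eps ^+ 2 * N.
Proof.
move=> no0 nh0 pinj a0 b0 g0.
have [K [K0p hK]] := scalar_main a0 b0 g0 (normr_ge0 K0).
exists K => fm dotA dotB dotG H X e1 hA hB hG FA FB FG FH FX.
move=> AT A G GT BT B e c S Shat M N.
have e0 : 0 <= e := fp_eps_ge0 fm.
have he : 0 <= e <= 1 by rewrite e0 e1.
pose n := tc_dim no nh.
pose rnd := fp_rnd fm.
pose U1 := \matrix_(i < n, j < nh) dotG (map_mx rnd (row i G)) (row j H^T).
pose U := \matrix_(i < n, j < n) dotG (map_mx rnd (row j G)) (row i U1).
pose V1 := \matrix_(i < n, j < n) dotB (map_mx rnd (row i BT)) (row j X^T).
pose V := \matrix_(i < n, j < n) dotB (map_mx rnd (row j BT)) (row i V1).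
pose W := \matrix_(i < n, j < n) fp_mul fm (U i j) (V i j).
have eS : Shat = \matrix_(i < no, j < no) dotA (map_mx rnd (row j AT))
   (row i (\matrix_(i0 < no, j0 < n) dotA (map_mx rnd (row i0 AT)) (row j0 W^T))).
  by [].
pose da := alpha * e + `|K0| * e ^+ 2.
pose db := beta * e + `|K0| * e ^+ 2.
pose dg := gamma * e + `|K0| * e ^+ 2.
pose ra := da + (1 + da) * da.
pose ru := dg + (1 + dg) * dg.
pose rv := db + (1 + db) * db.
pose w := ru * (1 + rv) * (1 + e) + rv * (1 + e) + e.
have d_ge0 : forall t : R, 0 <= t -> 0 <= t * e + `|K0| * e ^+ 2.
  move=> t t0; apply: addr_ge0; first exact: mulr_ge0.
  apply: mulr_ge0; [exact: normr_ge0 | exact: exprn_ge0].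
have r_ge0 : forall d : R, 0 <= d -> 0 <= d + (1 + d) * d.
  by move=> d d0; apply: addr_ge0 => //; apply: mulr_ge0 => //; apply: addr_ge0 => //; exact: ler01.
have ru0 : 0 <= ru by apply: r_ge0; apply: d_ge0.
have rv0 : 0 <= rv by apply: r_ge0; apply: d_ge0.
have ra0 : 0 <= ra by apply: r_ge0; apply: d_ge0.
have p1 : forall x : R, 0 <= x -> 0 <= 1 + x.
  by move=> x x0; apply: addr_ge0 => //; exact: ler01.
have w0 : 0 <= w.
  exact: addr_ge0 (addr_ge0 (mulr_ge0 (mulr_ge0 ru0 (p1 _ rv0)) (p1 _ e0))
     (mulr_ge0 rv0 (p1 _ e0))) e0.
pose P := absM G *m absM H *m absM GT.
pose Q := absM BT *m absM X *m absM B.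
pose Y := hadamard P Q.
pose Y0 := hadamard (G *m H *m G^T) (BT *m X *m BT^T).
have hU : forall i j, `|U i j - (G *m H *m G^T) i j| <= P i j * ru.
  by move=> i j; rewrite /U mxE; exact: (TWO hG FG FH g0).
have hV : forall i j, `|V i j - (BT *m X *m BT^T) i j| <= Q i j * rv.
  by move=> i j; rewrite /V mxE; exact: (TWO hB FB FX b0).
have hu : forall i j, `|(G *m H *m G^T) i j| <= P i j.
  move=> i j; rewrite -[P i j]mulr1; apply: mul_err_l => i0 j0.
  by rewrite mulr1; apply: abs_mul.
have hv : forall i j, `|(BT *m X *m BT^T) i j| <= Q i j.
  move=> i j; rewrite -[Q i j]mulr1; apply: mul_err_l => i0 j0.
  by rewrite mulr1; apply: abs_mul.
have hW : forall i j, `|W i j - Y0 i j| <= Y i j * w.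
  move=> i j; rewrite /W mxE /Y0 /Y !hadE.
  have [dd hdd ->] := fp_mul_spec fm (U i j) (V i j).
  exact: hadam (hU i j) (hu i j) (hV i j) (hv i j) hdd ru0 rv0.
have hW' : forall i j, `|W i j| <= Y i j * (1 + w).
  move=> i j; rewrite mulrDr mulr1 addrC -[W i j]subr0.
  apply: le_trans (ler_distD (Y0 i j) _ _) _; rewrite subr0; apply: lerD => //.
  rewrite /Y0 /Y !hadE normrM; apply: ler_pM => //; exact: normr_ge0.
have hWF : forall i j, fp_F fm (W i j) by move=> i j; rewrite /W mxE; apply: fp_mul_F.
have Y_ge0 : forall i j, 0 <= Y i j.
  move=> i j; rewrite /Y hadE; apply: mulr_ge0;
   (apply: mul_ge0; [apply: mul_ge0|]; move=> *; apply: absM_ge0).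
have M_ge0 : forall i j, 0 <= M i j.
  apply: mul_ge0; last by move=> *; apply: absM_ge0.
  apply: mul_ge0 => //; move=> *; apply: absM_ge0.
set t := c * e + K * e ^+ 2.
have t0 : 0 <= t.
  apply: addr_ge0; apply: mulr_ge0 => //; last exact: exprn_ge0.
  rewrite /c; apply: addr_ge0 => //; repeat apply: addr_ge0; apply: mulr_ge0 => //.
have hent : forall i j, `|(Shat - S) i j| <= M i j * t.
  move=> i j; rewrite mxBE.
  have h1 := TWO hA FA hWF a0 i j.
  have h2 : (absM AT *m absM W *m absM AT^T) i j <= M i j * (1 + w).
    apply: mono_l => [i0 j0|i0 j0]; last exact: absM_ge0.
    apply: mono_r => [i1 j1|i1 j1]; last exact: absM_ge0.
    by rewrite mxE; apply: hW'.
  have h3 : `|(AT *m W *m AT^T) i j - S i j| <= M i j * w.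
    rewrite /S /tc_exact -/Y0 -mxBE -mulmxBl -mulmxBr.
    apply: mul_err_l => i0 j0; apply: mul_err_r => i1 j1.
    by rewrite mxBE; apply: hW.
  rewrite eS mxE.
  apply: le_trans (ler_distD ((AT *m W *m AT^T) i j) _ _) _.
  apply: le_trans (lerD (le_trans h1 (ler_wpM2r ra0 h2)) h3) _.
  have := hK e he; rewrite /= -/da -/db -/dg -/ra -/ru -/rv -/w => hf.
  apply: (@le_trans _ _ (M i j * ((1 + w) * ra + w))).
    by apply: eqle; ring.
  exact: ler_wpM2l.
split.
  move=> i j; apply: le_trans (hent i j) _; apply: eqle; rewrite /t; ring.
have hM : norm1 (Shat - S) <= t * norm1 M.
  apply: norm1_le; first by apply: mulr_ge0 => //; apply: norm1_ge0.
  move=> j; apply: (@le_trans _ _ (\sum_i M i j * t)).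
    by apply: ler_sum => i _; apply: hent.
  rewrite -mulr_suml mulrC; apply: ler_wpM2l => //.
  apply: le_trans (col_le M j); apply: eqle; apply: eq_bigr => i _.
  by rewrite ger0_norm.
have hN : norm1 M <= N.
  apply: le_trans (norm1_mul _ _) _.
  apply: le_trans (ler_wpM2r (norm1_ge0 _) (norm1_mul _ _)) _.
  rewrite !norm1_abs /N.
  have hY : norm1 Y <= frob G * frob H * frob GT * (frob BT * frob X * frob B).
    apply: le_trans (norm1_had _ _) _.
    have hp : forall m1 m2 m3 (A1 : 'M[R]_(m1,m2)) (A2 : 'M[R]_m2) (A3 : 'M[R]_(m2,m3)),
        frob (absM A1 *m absM A2 *m absM A3) <= frob A1 * frob A2 * frob A3.
      move=> m1 m2 m3 A1 A2 A3.
      apply: le_trans (frob_mul _ _) _; rewrite frob_abs.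
      apply: ler_wpM2r; first exact: frob_ge0.
      by apply: le_trans (frob_mul _ _) _; rewrite !frob_abs.
    apply: ler_pM; try exact: frob_ge0; exact: hp.
  have nA0 := norm1_ge0 AT; have nA0' := norm1_ge0 A.
  apply: (@le_trans _ _ (norm1 AT * (frob G * frob H * frob GT * (frob BT * frob X * frob B)) * norm1 A)).
    apply: ler_wpM2r => //; apply: ler_wpM2l => //.
  by apply: eqle; ring.
apply: le_trans hM (le_trans (ler_wpM2l t0 hN) _); apply: eqle; rewrite /t; ring.
Qed.
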